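(* Let $G$ and $H$ be word-representable graphs with $|G| \ge |H|$. Then $l(G \,\square\, H) \le |H|\,l(G) + |G|\,l(H) + (|H|^2 - 1)|G|$.
   Context: All graphs are simple and undirected; $|G|$ denotes the number of vertices of $G$. Letters $x,y$ alternate in a word $w$ if deleting all other letters from $w$ yields $xyxy\ldots$ or $yxyx\ldots$ (of either parity). A word $w$ over $V(G)$ represents $G$ if every vertex occurs in $w$ and for all distinct $x,y$, $xy\in E(G)$ iff $x,y$ alternate in $w$; $G$ is word-representable if such a word exists, and $l(G)$ is the minimum length of a word representing $G$. The Cartesian product $G\,\square\,H$ has vertex set $V(G)\times V(H)$, with $(u,v)$ adjacent to $(u',v')$ iff either $u=u'$ and $vv'\in E(H)$, or $v=v'$ and $uu'\in E(G)$. *)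

(* Defs.v *)
From mathcomp Require Import all_boot.
Set Implicit Arguments. Unset Strict Implicit. Unset Printing Implicit Defensive.

Definition simple_graph (T : finType) (e : rel T) : Prop :=
  symmetric e /\ irreflexive e.

(* x and y alternate in w: deleting all letters other than x,y from w yields
   xyxy... or yxyx..., i.e. no two consecutive letters of the restricted word
   are equal. *)
Definition alternate (T : eqType) (w : seq T) (x y : T) : bool :=
  sorted (fun a b => a != b) (filter (fun z => (z == x) || (z == y)) w).

Definition represents (T : finType) (e : rel T) (w : seq T) : Prop :=
  (forall v : T, v \in w) /\
  (forall x y : T, x != y -> (e x y <-> alternate w x y)).

Definition word_representable (T : finType) (e : rel T) : Prop :=
  exists w, represents e w.

Definition is_min_rep_length (T : finType) (e : rel T) (n : nat) : Prop :=
  (exists w, represents e w /\ size w = n) /\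
  (forall w, represents e w -> n <= size w).

Definition cart_rel (T U : finType) (eG : rel T) (eH : rel U) : rel (T * U) :=
  fun p q => ((p.1 == q.1) && eH p.2 q.2) || ((p.2 == q.2) && eG p.1 q.1).

(* Main.v *)
Require Import Defs.
From mathcomp Require Import all_boot.
From mathcomp Require Import zify.
Set Implicit Arguments. Unset Strict Implicit. Unset Printing Implicit Defensive.


Definition altl (A : eqType) (s : seq A) := sorted (fun a b : A => a != b) s.

Lemma altl_catl (A : eqType) (s1 s2 : seq A) : altl (s1 ++ s2) -> altl s1.
Proof. case: s1 => //= a s1; rewrite cat_path => /andP[]. by []. Qed.

Lemma altl_catr (A : eqType) (s1 s2 : seq A) : altl (s1 ++ s2) -> altl s2.
Proof.
elim: s1 => //= a s1 IH H; apply: IH; exact: (path_sorted H).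
Qed.

Lemma altl_dup (A : eqType) (s1 s2 : seq A) e : ~~ altl (s1 ++ e :: e :: s2).
Proof. apply/negP => /altl_catr /=; by rewrite eqxx. Qed.

Lemma altl_cat (A : eqType) (z : A) s1 y s2 :
  altl ((z :: s1) ++ y :: s2) = [&& altl (z :: s1), last z s1 != y & altl (y :: s2)].
Proof. by rewrite /altl /= cat_path /=. Qed.

Definition over (A : eqType) (u v : A) (s : seq A) := all (fun z => (z == u) || (z == v)) s.

Lemma other (A : eqType) (u v p q e : A) :
  (e == u) || (e == v) -> (p == u) || (p == v) -> (q == u) || (q == v) -> p != q -> e != p -> e = q.
Proof.
by case/orP=> /eqP-> /orP[]/eqP-> /orP[]/eqP->; rewrite ?eqxx.
Qed.

Lemma altl_del (A : eqType) (u v p q : A) z y :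
  over u v z -> over u v y -> (p == u) || (p == v) -> (q == u) || (q == v) -> p != q ->
  altl (z ++ p :: q :: y) -> altl (z ++ y).
Proof.
move=> oz oy op oq pq.
case: z oz => [|z0 z] oz; first by move=> /= H; exact: (altl_catr (s1 := [:: p; q]) H).
case: y oy => [|y0 y] oy; first by rewrite cats0; apply: altl_catl.
rewrite !altl_cat /= => /and3P[az lz /andP[_ /andP[qy ay]]].
rewrite az ay andbT.
have lq : last z0 z = q.
  apply: (other (u:=u) (v:=v) (p:=p) (q:=q)) => //.
  by move: oz; rewrite /over => /allP; apply; apply: mem_last.
have yp : y0 = p.
  have y0o : (y0 == u) || (y0 == v) by move: oy => /andP[].
  have qy' : y0 != q by rewrite eq_sym.
  have pq' : q != p by rewrite eq_sym.
  exact: (other y0o oq op pq' qy').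
by rewrite lq yp eq_sym.
Qed.

Lemma altl_ins (A : eqType) (p q : A) z y :
  altl z -> altl y -> p != q ->
  (z != [::] -> last p z = q) -> (y != [::] -> head p y = p) ->
  altl (z ++ p :: q :: y).
Proof.
move=> az ay pq hz hy.
have H2 : altl (p :: q :: y).
  case: y ay hy => [|y0 y] ay hy; first by rewrite /altl /= pq.
  have e0 : y0 = p by exact: (hy isT).
  subst y0; rewrite /altl /= pq eq_sym pq /=; exact: ay.
case: z az hz => [|z0 z] az hz //.
rewrite altl_cat az H2 andbT.
have := hz isT => /= ->; by rewrite eq_sym.
Qed.

Lemma altl_rep (A : eqType) (p q : A) k : p != q -> altl (flatten (nseq k [:: p; q])).
Proof.
move=> pq; elim: k => [|k IH] //=.
case: k IH => [|k] IH /=; first by rewrite /altl /= pq.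
move: IH; rewrite /altl /= pq /= eq_sym pq /=; done.
Qed.

Lemma altl_tail (A : eqType) (p q : A) z k :
  altl z -> z != [::] -> last p z = q -> p != q -> altl (z ++ flatten (nseq k [:: p; q])).
Proof.
move=> az zn lz pq; case: k => [|k]; first by rewrite cats0.
rewrite /= ; apply: altl_ins => //; first exact: altl_rep.
by case: k.
Qed.

Lemma altl_pre (A : eqType) (p q : A) y k :
  p != q -> altl (flatten (nseq k [:: p; q]) ++ p :: y) = altl (p :: y).
Proof.
move=> pq; elim: k => [|k IH] //=.
rewrite /altl /= pq /=.
case: k IH => [|k] IH /=; first by rewrite eq_sym pq.
rewrite eq_sym pq /=; by move: IH; rewrite /altl /= pq.
Qed.


Lemma over_swap (A : eqType) (u v p q : A) s :
  over u v s -> (p == u) || (p == v) -> (q == u) || (q == v) -> p != q -> over p q s.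
Proof.
move=> os op oq pq; apply/allP => e es.
have oe : (e == u) || (e == v) by move: os => /allP; apply.
case: (eqVneq e p) => [->|ep]; first by rewrite ?eqxx.
by rewrite (other oe op oq pq ep) eqxx orbT.
Qed.

Lemma undup_allq (A : eqType) (q : A) s : s != [::] -> all (fun e => e == q) s -> undup s = [:: q].
Proof.
elim: s => [|z s IH] // _ /= /andP[/eqP -> aq].
case: s IH aq => [|z' s] IH aq; first by [].
have -> : q \in z' :: s by move: aq => /= /andP[/eqP -> _]; rewrite inE eqxx.
exact: IH.
Qed.

Lemma undup2 (A : eqType) (p q z : A) s : p != q -> over p q (z :: s) -> p \in z :: s ->
  last z s = q -> undup (z :: s) = [:: p; q].
Proof.
move=> pq; elim: s z => [|y s IH] z os ps ls.
  move: ps ls pq; rewrite inE /= => /eqP -> ->; by rewrite eqxx.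
rewrite [undup _]/=; case: ifP => zin.
  apply: IH => //; first by move: os => /andP[].
  by move: ps; rewrite inE => /orP[/eqP ->|].
have qin : q \in y :: s by rewrite -ls /=; apply: mem_last.
have zp : z = p.
  move: os => /andP[/orP[/eqP //| /eqP zq] _].
  by move: zin; rewrite zq qin.
subst z; congr (_ :: _); change (undup (y :: s) = [:: q]); apply: undup_allq => //.
apply/allP => e ein.
have : (e == p) || (e == q).
  move: os; rewrite /over /= => /andP[_ /andP[Hy /allP H]].
  by move: ein; rewrite inE => /orP[/eqP ->|/H].
case/orP => // /eqP ep; by move: zin; rewrite -ep ein.
Qed.

Definition firstord (A : eqType) (s : seq A) := rev (undup (rev s)).

Lemma firstord2 (A : eqType) (p q : A) s : p != q -> over p q (p :: s) -> q \in p :: s ->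
  firstord (p :: s) = [:: p; q].
Proof.
move=> pq os qs; rewrite /firstord rev_cons.
case Es : (rev s) => [|z t].
  by move: qs; rewrite inE -mem_rev Es in_nil orbF eq_sym (negPf pq).
rewrite rcons_cons (undup2 (p:=q) (q:=p)) //.
- by rewrite eq_sym.
- rewrite -rcons_cons -Es -rev_cons /over all_rev.
  by apply: sub_all os => e; rewrite orbC.
- by rewrite -rcons_cons -Es -rev_cons mem_rev.
- by rewrite last_rcons.
Qed.

Lemma filter_firstord (A : eqType) (P : pred A) s : filter P (firstord s) = firstord (filter P s).
Proof. by rewrite /firstord filter_rev filter_undup filter_rev. Qed.

Lemma firstord_uniq (A : eqType) (s : seq A) : uniq (firstord s).
Proof. by rewrite /firstord rev_uniq undup_uniq. Qed.

Lemma mem_firstord (A : eqType) (s : seq A) : firstord s =i s.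
Proof. by move=> e; rewrite /firstord mem_rev mem_undup mem_rev. Qed.


Definition Pr (A : eqType) (u v : A) (s : seq A) := filter (fun z => (z == u) || (z == v)) s.
Arguments Pr : simpl never.

Definition rho (U : eqType) (al be : seq U) := undup (firstord be ++ al).
Definition cnd (U : eqType) (al : seq U) (c : U) (be' : seq U) :=
  (c \notin be') && has (fun z => z \notin c :: be') al.

Fixpoint hrow (U : eqType) (k : nat) (al be : seq U) : seq U :=
  match be with
  | [::] => flatten (nseq k (rho al [::]))
  | c :: be' => (if cnd al c be' then rho al (c :: be') else [::]) ++ c :: hrow k (rcons al c) be'
  end.

Lemma over_Pr (A : eqType) (u v : A) s : over u v (Pr u v s).
Proof. by apply/allP => e; rewrite mem_filter => /andP[]. Qed.

Lemma over_cat (A : eqType) (u v : A) s t : over u v (s ++ t) = over u v s && over u v t.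
Proof. by rewrite /over all_cat. Qed.

Lemma last_nonempty (A : eqType) (x y : A) s : s != [::] -> last x s = last y s.
Proof. by case: s. Qed.

Lemma mem_Pr (A : eqType) (u v e : A) s : (e == u) || (e == v) -> (e \in Pr u v s) = (e \in s).
Proof. by move=> he; rewrite mem_filter he. Qed.

Lemma undup2' (A : eqType) (p q x0 : A) s : p != q -> s != [::] -> over p q s -> p \in s ->
  last x0 s = q -> undup s = [:: p; q].
Proof. case: s => // z s pq _; exact: undup2. Qed.

Lemma rho_pr_ne (U : eqType) (u v p q : U) al be : u != v ->
  u \in al ++ be -> v \in al ++ be -> Pr u v al != [::] ->
  (p == u) || (p == v) -> (q == u) || (q == v) -> p != q ->
  last p (Pr u v al) = q -> Pr u v (rho al be) = [:: p; q].
Proof.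
move=> uv ui vi ne op oq pq lq.
rewrite /Pr /rho filter_undup filter_cat filter_firstord -!/(Pr u v _).
apply: (undup2' (x0 := p)) => //.
- by case: (firstord _) => //; case: (Pr u v al) ne.
- apply: (over_swap (u:=u) (v:=v)) => //; rewrite over_cat; apply/andP; split; last exact: over_Pr.
  by apply/allP => e; rewrite mem_firstord => /(allP (over_Pr u v be)).
- have : p \in al ++ be by case/orP: op => /eqP ->.
  by rewrite mem_cat => H; rewrite mem_cat mem_firstord !mem_Pr // orbC.
- by rewrite last_cat (last_nonempty _ p ne).
Qed.

Lemma rho_pr_e (U : eqType) (u v p q : U) al be y : u != v ->
  u \in al ++ be -> v \in al ++ be -> Pr u v al = [::] -> Pr u v be = p :: y ->
  (q == u) || (q == v) -> p != q -> Pr u v (rho al be) = [:: p; q].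
Proof.
move=> uv ui vi e0 e1 oq pq.
rewrite /Pr /rho filter_undup filter_cat filter_firstord -!/(Pr u v _) e0 e1 cats0.
rewrite undup_id ?firstord_uniq //.
have op : (p == u) || (p == v) by have := over_Pr u v be; rewrite e1 => /andP[].
apply: firstord2 => //.
- by rewrite -e1; apply: (over_swap (u:=u) (v:=v)) => //; exact: over_Pr.
- have : q \in Pr u v (al ++ be) by rewrite (mem_Pr _ oq); case/orP: oq => /eqP ->.
  by rewrite -e1 /Pr filter_cat -!/(Pr u v _) e0.
Qed.


Lemma Pr_cat (A : eqType) (u v : A) s t : Pr u v (s ++ t) = Pr u v s ++ Pr u v t.
Proof. exact: filter_cat. Qed.

Lemma Pr_rep (A : eqType) (u v : A) k s : Pr u v (flatten (nseq k s)) = flatten (nseq k (Pr u v s)).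
Proof. by elim: k => //= k IH; rewrite Pr_cat IH. Qed.

Definition oth (A : eqType) (u v d : A) := if d == u then v else u.

Lemma oth_over (A : eqType) (u v d : A) : (oth u v d == u) || (oth u v d == v).
Proof. by rewrite /oth; case: ifP; rewrite eqxx ?orbT. Qed.

Lemma oth_ne (A : eqType) (u v d : A) : u != v -> (d == u) || (d == v) -> oth u v d != d.
Proof.
move=> uv; rewrite /oth; case: ifP => [/eqP du|du] hd; first by rewrite du eq_sym.
by rewrite eq_sym du.
Qed.

Lemma last_over (A : eqType) (u v x : A) s : s != [::] -> over u v s -> (last x s == u) || (last x s == v).
Proof. case: s => // z s _ /allP H; apply: H; rewrite /=; exact: mem_last. Qed.

Lemma head_over (A : eqType) (u v x : A) s : s != [::] -> over u v s -> (head x s == u) || (head x s == v).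
Proof. case: s => // z s _ /andP[]. by []. Qed.

Lemma Pr_ne (A : eqType) (u v : A) s : u \in s -> Pr u v s != [::].
Proof.
move=> us; apply/eqP => e; have : u \in Pr u v s by rewrite mem_Pr ?eqxx.
by rewrite e.
Qed.

Lemma hrow_alt (U : eqType) (u v : U) (k : nat) : u != v ->
  forall be al z, u \in al ++ be -> v \in al ++ be -> over u v z ->
  (Pr u v al != [::] -> z != [::] /\ last u z = last u (Pr u v al)) ->
  altl (z ++ Pr u v be) -> altl (z ++ Pr u v (hrow k al be)).
Proof.
move=> uv; elim=> [|c be IH] al z ui vi oz hz az /=.
  have ne : Pr u v al != [::] by apply: Pr_ne; rewrite cats0 in ui.
  case: (hz ne) => zne lz.
  set d := last u (Pr u v al).
  have od : (d == u) || (d == v) by apply: last_over => //; exact: over_Pr.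
  rewrite Pr_rep (@rho_pr_ne _ u v (oth u v d) d) //.
  - apply: (altl_tail (p := oth u v d) (q := d)).
    + by move: az; rewrite /Pr /= cats0.
    + exact: zne.
    + by rewrite (last_nonempty _ u zne) lz.
    + by apply: oth_ne.
  - exact: oth_over.
  - exact: oth_ne.
  - by rewrite (last_nonempty _ u ne).
set ins := (if cnd al c be then rho al (c :: be) else [::]).
have [z1 [oz1 hz1 az1 ez1]] : exists z1, [/\ over u v z1,
    (Pr u v al != [::] -> z1 != [::] /\ last u z1 = last u (Pr u v al)),
    altl (z1 ++ Pr u v (c :: be)) & z ++ Pr u v ins = z1].
  rewrite /ins; case: ifP => _; last by exists z; rewrite /= cats0.
  case: (eqVneq (Pr u v al) [::]) => [e0|ne].
  - have nu : u \notin al by apply/negP => H; move: (Pr_ne v H); rewrite e0.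
    have ne2 : Pr u v (c :: be) != [::].
      by apply: Pr_ne; move: ui; rewrite mem_cat (negbTE nu).
    case E : (Pr u v (c :: be)) ne2 => [|p y] // _.
    have op : (p == u) || (p == v) by have := over_Pr u v (c :: be); rewrite E => /andP[].
    have pq : p != oth u v p by rewrite eq_sym; apply: oth_ne.
    rewrite (@rho_pr_e _ u v p (oth u v p) al (c :: be) y) //; last exact: oth_over.
    exists (z ++ [:: p; oth u v p]); split => //.
    + by rewrite over_cat oz /= op oth_over.
    + rewrite -catA /=; apply: altl_ins => //.
      * exact: (altl_catl az).
      * by move: az; rewrite E => /altl_catr.
      * case: z az oz {hz} => // z0 z'; rewrite E altl_cat => /and3P[_ lz _] oz _.
        rewrite (last_nonempty _ u) //.
        apply: (other (u := u) (v := v) (p := p)) => //; first exact: (last_over u (isT : z0 :: z' != [::]) oz).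
        exact: oth_over.
  - case: (hz ne) => zne lz.
    set d := last u (Pr u v al).
    have od : (d == u) || (d == v) by apply: last_over => //; exact: over_Pr.
    have pq : oth u v d != d by apply: oth_ne.
    have E2 : Pr u v (rho al (c :: be)) = [:: oth u v d; d].
      apply: rho_pr_ne => //; first exact: oth_over.
      by rewrite (last_nonempty _ u ne).
    rewrite E2.
    exists (z ++ [:: oth u v d; d]); split => //.
    + by rewrite over_cat oz /= od oth_over.
    + by move=> _; split; [case: (z) | rewrite last_cat].
    + set Y := Pr u v (c :: be) in az *.
      rewrite -catA /=; apply: altl_ins => //.
      * exact: (altl_catl az).
      * exact: (altl_catr az).
      * by move=> _; rewrite (last_nonempty _ u zne).
      * rewrite /Y in az *; case E : (Pr u v (c :: be)) => [|y0 y] // _ /=.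
        case: z az oz hz zne lz => // z0 z'; move=> + + _. rewrite E altl_cat => /and3P[_ ly _] oz _ lz.
        have oy : (y0 == u) || (y0 == v) by have := over_Pr u v (c :: be); rewrite E => /andP[].
        apply: (other (u := u) (v := v) (p := d)) => //; first exact: oth_over.
        - by rewrite eq_sym.
        - have H : last z0 z' = d by exact: lz.
          by rewrite -H eq_sym.
rewrite Pr_cat catA ez1 -cat1s Pr_cat catA.
apply: IH.
- by rewrite cat_rcons.
- by rewrite cat_rcons.
- by rewrite over_cat oz1 over_Pr.
- rewrite -cats1 Pr_cat.
  case: (boolP ((c == u) || (c == v))) => oc.
  + have -> : Pr u v [:: c] = [:: c] by rewrite /Pr /= oc.
    by move=> _; split; [case: (z1) | rewrite !last_cat].
  + have -> : Pr u v [:: c] = [::] by rewrite /Pr /= (negbTE oc).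
    by rewrite !cats0.
- by rewrite -catA -Pr_cat cat1s.
Qed.


Lemma rho_pair (U : eqType) (u v : U) al be : u != v -> u \in al ++ be -> v \in al ++ be ->
  exists p q, [/\ Pr u v (rho al be) = [:: p; q], (p == u) || (p == v), (q == u) || (q == v) & p != q].
Proof.
move=> uv ui vi.
case: (eqVneq (Pr u v al) [::]) => [e0|ne].
- have nu : u \notin al by apply/negP => H; move: (Pr_ne v H); rewrite e0.
  have ne2 : Pr u v be != [::] by apply: Pr_ne; move: ui; rewrite mem_cat (negbTE nu).
  case E : (Pr u v be) ne2 => [|p y] // _.
  have op : (p == u) || (p == v) by have := over_Pr u v be; rewrite E => /andP[].
  have pq : p != oth u v p by rewrite eq_sym; apply: oth_ne.
  exists p, (oth u v p); split => //; last exact: oth_over.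
  apply: rho_pr_e E _ _ => //; exact: oth_over.
- set d := last u (Pr u v al).
  have od : (d == u) || (d == v) by apply: last_over => //; exact: over_Pr.
  have pq : oth u v d != d by apply: oth_ne.
  exists (oth u v d), d; split => //; last exact: oth_over.
  apply: rho_pr_ne => //; first exact: oth_over.
  by rewrite (last_nonempty _ u ne).
Qed.

Lemma hrow_alt_rev (U : eqType) (u v : U) (k : nat) : u != v ->
  forall be al z, u \in al ++ be -> v \in al ++ be -> over u v z ->
  altl (z ++ Pr u v (hrow k al be)) -> altl (z ++ Pr u v be).
Proof.
move=> uv; elim=> [|c be IH] al z ui vi oz /=.
  by move=> /altl_catl; rewrite /Pr /= cats0.
rewrite Pr_cat => H.
have H1 : altl (z ++ Pr u v (c :: hrow k (rcons al c) be)).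
  move: H; case: ifP => _ //.
  have [p [q [E op oq pq]]] := rho_pair uv ui vi.
  rewrite E; apply: (altl_del (u:=u) (v:=v) (p:=p) (q:=q)) => //; exact: over_Pr.
rewrite -cat1s Pr_cat catA.
apply: (IH (rcons al c)).
- by rewrite cat_rcons.
- by rewrite cat_rcons.
- by rewrite over_cat oz over_Pr.
- by rewrite -catA -Pr_cat cat1s.
Qed.

Lemma hrow_k (U : eqType) k (be al : seq U) :
  hrow k al be = hrow 0 al be ++ flatten (nseq k (rho (al ++ be) [::])).
Proof.
elim: be al => [|c be IH] al /=; first by rewrite cats0.
by rewrite IH cat_rcons -!catA.
Qed.

Lemma hrow_row (U : eqType) (u v : U) k h : u != v -> u \in h -> v \in h ->
  altl (Pr u v (hrow 0 [::] h ++ flatten (nseq k (undup h)))) = altl (Pr u v h).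
Proof.
move=> uv ui vi.
have -> : hrow 0 [::] h ++ flatten (nseq k (undup h)) = hrow k [::] h.
  by rewrite (hrow_k k).
apply/idP/idP.
- by move=> H; apply: (@hrow_alt_rev _ u v k uv h [::] [::]).
- by move=> H; apply: (@hrow_alt _ u v k uv h [::] [::]).
Qed.


Definition Round (T U : Type) (pg : seq T) (r : seq U) : seq (T * U) := [seq (x, u) | x <- pg, u <- r].

Fixpoint build (T U : eqType) (pg : seq T) (al be : seq U) : seq (T * U) :=
  match be with
  | [::] => [::]
  | c :: be' => (if cnd al c be' then Round pg (rho al (c :: be')) else [::]) ++
                Round pg [:: c] ++ build pg (rcons al c) be'
  end.

Lemma flat_cnt (A B : eqType) (x : A) (L : seq B) s :
  flatten [seq (if y == x then L else [::]) | y <- s] = flatten (nseq (count_mem x s) L).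
Proof.
elim: s => //= y s ->; rewrite eq_sym; by case: (x == y).
Qed.

Lemma filt_row (T U : eqType) (pg : seq T) (r : seq U) x :
  filter (fun p => p.1 == x) (Round pg r) = flatten (nseq (count_mem x pg) [seq (x, u) | u <- r]).
Proof.
rewrite /Round filter_flatten -map_comp -flat_cnt; congr flatten.
apply: eq_map => y /=; rewrite filter_map; case: (eqVneq y x) => [->|yx].
- by congr map; apply/all_filterP/allP => w _ /=; rewrite eqxx.
- by rewrite (@eq_filter _ _ pred0) ?filter_pred0 // => w /=; rewrite (negbTE yx).
Qed.

Lemma filt_col (T U : eqType) (pg : seq T) (r : seq U) u : uniq r ->
  filter (fun p => p.2 == u) (Round pg r) = if u \in r then [seq (y, u) | y <- pg] else [::].
Proof.
move=> ur; rewrite /Round filter_flatten -map_comp.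
case: ifP => ui.
- rewrite -[RHS]flatten_map1; congr flatten; apply: eq_map => y /=.
  rewrite filter_map (@eq_filter _ _ (pred1 u)) ?filter_pred1_uniq //.
- elim: pg => //= y pg ->; rewrite filter_map (@eq_in_filter _ _ pred0) ?filter_pred0 //.
  by move=> w wr /=; apply/negP => /eqP E; move: ui; rewrite -E wr.
Qed.

Lemma filter1_if (U : eqType) (r : seq U) u : uniq r ->
  filter (fun w => w == u) r = if u \in r then [:: u] else [::].
Proof.
move=> ur; case: ifP => ui; first by rewrite (@eq_filter _ _ (pred1 u)) ?filter_pred1_uniq.
rewrite (@eq_in_filter _ _ pred0) ?filter_pred0 //.
by move=> w wr /=; apply/negP => /eqP E; move: ui; rewrite -E wr.
Qed.

Lemma filt_ab (T U : eqType) (pg : seq T) (r : seq U) x y u v : x != y -> uniq r ->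
  filter (fun p => (p == (x, u)) || (p == (y, v))) (Round pg r) =
  flatten [seq (if z == x then (if u \in r then [:: (x, u)] else [::])
               else if z == y then (if v \in r then [:: (y, v)] else [::]) else [::]) | z <- pg].
Proof.
move=> xy ur; rewrite /Round filter_flatten -map_comp; congr flatten; apply: eq_map => z /=.
rewrite filter_map.
case: (eqVneq z x) => [->|zx].
- rewrite (@eq_filter _ _ (fun w => w == u)); first by rewrite filter1_if //; case: ifP.
  by move=> w /=; rewrite !xpair_eqE eqxx (negbTE xy) /= orbF.
case: (eqVneq z y) => [->|zy].
- rewrite (@eq_filter _ _ (fun w => w == v)); first by rewrite filter1_if //; case: ifP.
  by move=> w /=; rewrite !xpair_eqE eqxx [y == x]eq_sym (negbTE xy).
- rewrite (@eq_filter _ _ pred0) ?filter_pred0 //.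
  by move=> w /=; rewrite !xpair_eqE (negbTE zx) (negbTE zy).
Qed.

Lemma flat_xy (A B : eqType) (x y : A) (L1 L2 : seq B) s :
  flatten [seq (if z == x then L1 else if z == y then L2 else [::]) | z <- s] =
  flatten [seq (if z == x then L1 else L2) | z <- filter (fun z => (z == x) || (z == y)) s].
Proof.
elim: s => //= z s IH; case: (eqVneq z x) => [->|zx]; first by rewrite /= eqxx IH.
by case: (eqVneq z y) => [E|zy] /=; rewrite ?(negbTE zx) IH.
Qed.

Lemma build_split (T U : eqType) (pg : seq T) (be1 be2 al : seq U) :
  exists X, build pg al (be1 ++ be2) = X ++ build pg (al ++ be1) be2.
Proof.
elim: be1 al => [|c be1 IH] al /=; first by exists [::]; rewrite cats0.
have [X ->] := IH (rcons al c).
by exists ((if cnd al c (be1 ++ be2) then Round pg (rho al (c :: be1 ++ be2)) else [::]) ++ Round pg [:: c] ++ X);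
  rewrite cat_rcons -!catA.
Qed.


Lemma map_rep (A B : Type) (f : A -> B) k L :
  map f (flatten (nseq k L)) = flatten (nseq k (map f L)).
Proof. by elim: k => //= k IH; rewrite map_cat IH. Qed.

Lemma alt_sub (A : eqType) (P : pred A) w a b : P a -> P b ->
  alternate (filter P w) a b = alternate w a b.
Proof.
move=> Pa Pb; rewrite /alternate -filter_predI; congr sorted; apply: eq_filter => z /=.
by case: (eqVneq z a) => [->|_] //=; case: (eqVneq z b) => [->|_]; rewrite ?andbF.
Qed.

Lemma alt_map (A B : eqType) (f : A -> B) w a b : injective f ->
  alternate (map f w) (f a) (f b) = alternate w a b.
Proof.
move=> fi; rewrite /alternate filter_map.
rewrite (@eq_filter _ _ (fun z => (z == a) || (z == b))); last by move=> z /=; rewrite !inj_eq.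
rewrite sorted_map; case: (filter _ _) => //= z s; apply: eq_path => p q /=; by rewrite inj_eq.
Qed.

Lemma alt_Pr (A : eqType) w (a b : A) : alternate w a b = altl (Pr a b w).
Proof. by []. Qed.

Lemma row_build (T U : eqType) (pg : seq T) x : count_mem x pg = 1 ->
  forall (be al : seq U),
  filter (fun p => p.1 == x) (build pg al be) = map (pair x) (hrow 0 al be).
Proof.
move=> cx; elim=> [|c be IH] al //=.
rewrite !filter_cat IH !filt_row cx /= map_cat; congr (_ ++ _).
by case: ifP => _ //; rewrite filt_row cx /= cats0.
Qed.

Lemma count_firstord (A : eqType) (g : seq A) x : x \in g -> count_mem x (firstord g) = 1.
Proof. by move=> xg; rewrite count_uniq_mem ?firstord_uniq // mem_firstord xg. Qed.

Definition Wd (T U : eqType) (g : seq T) (h : seq U) :=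
  build (firstord g) [::] h ++ Round g (undup h).

Lemma W_row (T U : eqType) (g : seq T) (h : seq U) x u v : x \in g -> u != v -> u \in h -> v \in h ->
  alternate (Wd g h) (x, u) (x, v) = alternate h u v.
Proof.
move=> xg uv ui vi.
rewrite -(@alt_sub _ (fun p => p.1 == x)) ?eqxx // /Wd filter_cat row_build ?count_firstord //.
rewrite filt_row -map_rep -map_cat alt_map; last by move=> p q [].
by rewrite !alt_Pr hrow_row.
Qed.

Lemma col_build (T U : eqType) (pg : seq T) u :
  forall (be al : seq U), u \in al ++ be -> exists K,
  filter (fun p => p.2 == u) (build pg al be) = map (fun y => (y, u)) (flatten (nseq K pg)).
Proof.
elim=> [|c be IH] al ui /=; first by exists 0.
have ui' : u \in rcons al c ++ be by rewrite cat_rcons.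
rewrite !filter_cat; have [K ->] := IH _ ui'.
rewrite filt_col // inE.
have ur : u \in rho al (c :: be) by rewrite mem_undup mem_cat mem_firstord orbC -mem_cat.
case: ifP => _; rewrite ?filt_col ?undup_uniq ?ur //.
- case: (eqVneq u c) => _.
  + by exists K.+2; rewrite /= !map_cat catA.
  + by exists K.+1; rewrite /= !map_cat.
- case: (eqVneq u c) => _.
  + by exists K.+1; rewrite /= !map_cat.
  + by exists K.
Qed.

Lemma W_col (T U : eqType) (g : seq T) (h : seq U) x y u : x != y -> x \in g -> y \in g -> u \in h ->
  alternate (Wd g h) (x, u) (y, u) = alternate g x y.
Proof.
move=> xy xg yg ui.
rewrite -(@alt_sub _ (fun p => p.2 == u)) ?eqxx // /Wd filter_cat.
have [K ->] := col_build (firstord g) ui (al := [::]).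
rewrite filt_col ?undup_uniq // mem_undup ui -map_cat alt_map; last by move=> p q [].
rewrite !alt_Pr /Pr filter_cat -/(Pr x y g) -/(Pr x y _) Pr_rep.
have : x \in Pr x y g by rewrite mem_Pr ?eqxx.
case E : (Pr x y g) => [|p s] // _.
have op : (p == x) || (p == y) by have := over_Pr x y g; rewrite E => /andP[].
have pq : p != oth x y p by rewrite eq_sym; apply: oth_ne.
rewrite /Pr filter_firstord -/(Pr x y g) E (firstord2 (q := oth x y p)) //.
- by rewrite altl_pre.
- by rewrite -E; apply: (over_swap (u:=x) (v:=y)) => //; [exact: over_Pr | exact: oth_over].
- rewrite -E mem_Pr ?oth_over //; rewrite /oth; case: ifP => //.
Qed.

Lemma round_ab (T U : eqType) (pg : seq T) (r : seq U) x y u v : x != y -> uniq r ->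
  Pr x y pg = [:: x; y] -> u \in r -> v \in r ->
  filter (fun p => (p == (x, u)) || (p == (y, v))) (Round pg r) = [:: (x, u); (y, v)].
Proof.
move=> xy ur E ui vi; rewrite filt_ab // ui vi flat_xy -/(Pr x y pg) E /= eqxx.
by rewrite eq_sym (negbTE xy).
Qed.

Lemma pblock_ab (T U : eqType) (pg : seq T) (c : U) x y u v : x != y ->
  Pr x y pg = [:: x; y] ->
  filter (fun p => (p == (x, u)) || (p == (y, v))) (Round pg [:: c]) =
  (if u == c then [:: (x, u)] else [::]) ++ (if v == c then [:: (y, v)] else [::]).
Proof.
move=> xy E; rewrite filt_ab // flat_xy -/(Pr x y pg) E /= eqxx eq_sym (negbTE xy) !inE.
by rewrite cats0.
Qed.

Lemma cw_tail (T U : eqType) (pg : seq T) x y u v : x != y -> Pr x y pg = [:: x; y] ->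
  forall (be al : seq U), u \in al ++ be -> v \in al ++ be -> u \notin be -> v \notin be ->
  exists j, filter (fun p => (p == (x, u)) || (p == (y, v))) (build pg al be) =
            flatten (nseq j [:: (x, u); (y, v)]).
Proof.
move=> xy E; elim=> [|c be IH] al ui vi nu nv /=; first by exists 0.
have ui' : u \in rcons al c ++ be by rewrite cat_rcons.
have vi' : v \in rcons al c ++ be by rewrite cat_rcons.
move: nu nv; rewrite !inE !negb_or => /andP[uc nu] /andP[vc nv].
rewrite !filter_cat; have [j ->] := IH _ ui' vi' nu nv.
rewrite pblock_ab // (negbTE uc) (negbTE vc) /=.
case: ifP => _; last by exists j.
rewrite round_ab ?undup_uniq //; first by exists j.+1.
- by rewrite mem_undup mem_cat mem_firstord orbC -mem_cat.
- by rewrite mem_undup mem_cat mem_firstord orbC -mem_cat.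
Qed.

Lemma split_has (A : eqType) (P : pred A) s : has P s ->
  exists s1 d s2, [/\ s = s1 ++ d :: s2, P d & ~~ has P s1].
Proof.
elim: s => //= z s IH; case: (boolP (P z)) => Pz /= H.
- by exists [::], z, s.
- have [s1 [d [s2 [-> Pd nP]]]] := IH H.
  by exists (z :: s1), d, s2; split => //=; rewrite negb_or Pz nP.
Qed.

Lemma altl_dup' (A : eqType) (s : seq A) : (exists s1 s2 e, s = s1 ++ e :: e :: s2) -> ~~ altl s.
Proof. by case=> s1 [s2 [e ->]]; apply: altl_dup. Qed.

Lemma W_cross (T U : eqType) (g : seq T) (h : seq U) x y u v : x != y -> u != v ->
  x \in g -> y \in g -> u \in h -> v \in h -> (exists s, Pr x y g = x :: s) ->
  ~~ alternate (Wd g h) (x, u) (y, v).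
Proof.
move=> xy uv xg yg ui vi [s Eg].
have E : Pr x y (firstord g) = [:: x; y].
  rewrite /Pr filter_firstord -/(Pr x y g) Eg (firstord2 (q := y)) //.
  - by rewrite -Eg; exact: over_Pr.
  - by rewrite -Eg mem_Pr // eqxx orbT.
have hP : has (fun z => (z == u) || (z == v)) (rev h).
  by apply/hasP; exists u; rewrite ?mem_rev ?eqxx.
have [s1 [d [s2 [Eh Pd nP]]]] := split_has hP.
have Eh' : h = rev s2 ++ d :: rev s1 by rewrite -[h]revK Eh rev_cat rev_cons cat_rcons.
have nu : u \notin rev s1.
  by rewrite mem_rev; apply/negP => H; move/hasP: nP; apply; exists u; rewrite ?eqxx.
have nv : v \notin rev s1.
  by rewrite mem_rev; apply/negP => H; move/hasP: nP; apply; exists v; rewrite ?eqxx ?orbT.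
set h1 := rev s2; set h3 := rev s1.
have [X EX] := build_split (firstord g) h1 (d :: h3) [::].
have ui' : u \in rcons h1 d ++ h3 by rewrite cat_rcons -Eh'.
have vi' : v \in rcons h1 d ++ h3 by rewrite cat_rcons -Eh'.
have [j Ej] := cw_tail xy E ui' vi' nu nv.
have EG : filter (fun p => (p == (x, u)) || (p == (y, v))) (Round g (undup h)) = (x, u) :: 
          flatten [seq (if z == x then [:: (x, u)] else [:: (y, v)]) | z <- s].
  have uh : u \in undup h by rewrite mem_undup.
  have vh : v \in undup h by rewrite mem_undup.
  by rewrite filt_ab ?undup_uniq // uh vh flat_xy -/(Pr x y g) Eg /= eqxx.
rewrite /alternate /Wd filter_cat EG {1}Eh' EX cat0s !filter_cat Ej pblock_ab //.
apply: altl_dup'.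
case/orP: Pd => /eqP Ed; subst d.
- rewrite eqxx eq_sym (negbTE uv) cats0.
  case: j Ej => [|j] Ej.
  + by exists ([seq p <- X | (p == (x, u)) || (p == (y, v))] ++
         [seq p <- if cnd h1 u h3 then Round (firstord g) (rho h1 (u :: h3)) else [::] | (p == (x, u)) || (p == (y, v))]),
       (flatten [seq (if z == x then [:: (x, u)] else [:: (y, v)]) | z <- s]), (x, u); rewrite -!catA.
  + by exists ([seq p <- X | (p == (x, u)) || (p == (y, v))] ++
         [seq p <- if cnd h1 u h3 then Round (firstord g) (rho h1 (u :: h3)) else [::] | (p == (x, u)) || (p == (y, v))]),
       ((y, v) :: flatten (nseq j [:: (x, u); (y, v)]) ++ (x, u) :: flatten [seq (if z == x then [:: (x, u)] else [:: (y, v)]) | z <- s]), (x, u);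
       rewrite -!catA.
- have cv : cnd h1 v h3.
    rewrite /cnd nv /=; apply/hasP; exists u.
    + move: ui; rewrite {1}Eh' mem_cat in_cons (negbTE uv) (negbTE nu) /=.
      by rewrite orbF.
    + by rewrite in_cons (negbTE uv).
  rewrite cv eqxx (negbTE uv) round_ab ?undup_uniq //.
  + by exists ([seq p <- X | (p == (x, u)) || (p == (y, v))] ++ [:: (x, u)]),
       (flatten (nseq j [:: (x, u); (y, v)]) ++ (x, u) :: flatten [seq (if z == x then [:: (x, u)] else [:: (y, v)]) | z <- s]), (y, v);
       rewrite -!catA.
  + by rewrite mem_undup mem_cat mem_firstord orbC -mem_cat -Eh'.
  + by rewrite mem_undup mem_cat mem_firstord orbC -mem_cat -Eh'.
Qed.


Fixpoint nr (U : eqType) (al be : seq U) : nat :=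
  match be with [::] => 0 | c :: be' => cnd al c be' + nr (rcons al c) be' end.

Lemma size_build (T : eqType) (U : finType) (pg : seq T) (be al : seq U) :
  size (build pg al be) <= nr al be * (size pg * #|U|) + size be * size pg.
Proof.
elim: be al => [|c be IH] al //=.
rewrite !size_cat /Round size_allpairs /= muln1.
have := IH (rcons al c).
have hr : size (rho al (c :: be)) <= #|U|.
  by rewrite -(card_uniqP (undup_uniq _)) max_card.
case: (cnd al c be) => /=.
- rewrite size_allpairs mulnDl mul1n mulSn; have := leq_mul (leqnn (size pg)) hr.
  move: (size pg * size _) (size pg * #|U|) (nr _ _ * _) (size be * size pg) (size (build _ _ _)) => *; lia.
- rewrite mulSn; move: (nr _ _ * _) (size be * size pg) (size (build _ _ _)) => *; lia.
Qed.

Lemma nr_bound (U : eqType) (be al : seq U) :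
  nr al be + all (fun z => z \in be) al <= size (undup be) + (be == [::]).
Proof.
elim: be al => [|c be IH] al /=; first by case: (all _ _).
have := IH (rcons al c); rewrite all_rcons /cnd.
have hA : has (fun z => z \notin c :: be) al = ~~ all (fun z => z \in c :: be) al.
  by rewrite -has_predC.
rewrite hA.
case: (boolP (c \in be)) => cb /=.
- have -> : all (fun z => z \in c :: be) al = all (fun z => z \in be) al.
    apply: eq_all => z; rewrite inE; by case: (eqVneq z c) => [->|].
  have -> : (be == [::]) = false by apply/eqP => E; rewrite E in cb.
  by case: (all _ _) => /=; rewrite !addn0 ?add0n.
- case: (eqVneq be [::]) => [->|bn] /=; first by case: (all _ _).
  by case: (all _ _) => /=; rewrite ?addn0 ?add0n ?addn1 ?add1n.
Qed.


Lemma alt_sym (A : eqType) (w : seq A) a b : alternate w a b = alternate w b a.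
Proof. by rewrite /alternate (@eq_filter _ _ (fun z => (z == b) || (z == a))) // => z; rewrite orbC. Qed.

Lemma nr_le (U : finType) (h : seq U) : nr [::] h <= #|U| - 1.
Proof.
case: (eqVneq h [::]) => [->|hn] //.
have := nr_bound h [::]; rewrite (negbTE hn) /= addn0 => H1.
have : size (undup h) <= #|U| by rewrite -(card_uniqP (undup_uniq _)) max_card.
move: (nr _ _) (size _) (#|U|) H1 => a b c; lia.
Qed.

Unset Implicit Arguments.

Theorem mainTheorem7 (T U : finType) (eG : rel T) (eH : rel U)
  (lG lH : nat) :
  simple_graph eG -> simple_graph eH ->
  word_representable eG -> word_representable eH ->
  #|U| <= #|T| ->
  is_min_rep_length eG lG -> is_min_rep_length eH lH ->
  exists w : seq (T * U),
    represents (cart_rel eG eH) w /\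
    size w <= #|U| * lG + #|T| * lH + (#|U| ^ 2 - 1) * #|T|.
Proof.
move=> _ _ _ _ _ [[g [[gall hG] sg]] _] [[h [[hall hH] sh]] _].
exists (Wd g h); split.
- split.
  + case=> x u; rewrite /Wd mem_cat; apply/orP; right.
    by apply: allpairs_f; rewrite ?mem_undup.
  + case=> x u [y v] ne; rewrite /cart_rel /=.
    case: (eqVneq x y) => [exy|xy].
    * subst y; have uv : u != v by apply: contraNneq ne => ->.
      rewrite /= (negbTE uv) /= orbF W_row //; exact: hH.
    * case: (eqVneq u v) => [euv|uv].
      - subst v; rewrite /= W_col //; exact: hG.
      - rewrite /=.
        split => // H; exfalso; move: H; apply/negP.
        have : x \in Pr x y g by rewrite mem_Pr ?eqxx.
        case E : (Pr x y g) => [|z s] // _.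
        have : (z == x) || (z == y) by have := over_Pr x y g; rewrite E => /andP[].
        case/orP => /eqP ez; subst z.
        + by apply: W_cross => //; exists s.
        + rewrite alt_sym; apply: W_cross => //; try by rewrite eq_sym.
          exists s; rewrite -E /Pr; apply: eq_filter => z; by rewrite orbC.
- rewrite /Wd size_cat /Round size_allpairs.
  have h1 := size_build (firstord g) h [::].
  have h2 := nr_le h.
  have h3 : size (firstord g) <= #|T| by rewrite -(card_uniqP (firstord_uniq _)) max_card.
  have h4 : size (undup h) <= #|U| by rewrite -(card_uniqP (undup_uniq _)) max_card.
  rewrite sg sh in h1 *.
  set N := nr [::] h in h1 h2; set m' := size (firstord g) in h1 h3 *;
  set n' := size (undup h) in h4 *; set m := #|T| in h3 *; set n := #|U| in h2 h4 h1 *.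
  have k1 : N * (m' * n) <= (n - 1) * (m * n) by apply: leq_mul => //; apply: leq_mul.
  have k2 : (n - 1) * (m * n) <= (n ^ 2 - 1) * m.
    have e1 : (n - 1) * (m * n) = m * ((n - 1) * n) by rewrite mulnCA mulnC.
    have e2 : (n ^ 2 - 1) * m = m * (n ^ 2 - 1) by rewrite mulnC.
    rewrite e1 e2 leq_mul2l; apply/orP; right.
    case: (n) => // k; nia.
  have k3 : lH * m' <= m * lH by rewrite [m * _]mulnC leq_mul2l h3 orbT.
  have k4 : lG * n' <= n * lG by rewrite [n * _]mulnC leq_mul2l h4 orbT.
  move: h1 k1 k2 k3 k4.
  move: (size (build _ _ _)) (N * (m' * n)) ((n - 1) * (m * n)) ((n ^ 2 - 1) * m) (lH * m') (m * lH) (lG * n') (n * lG).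
  move=> *; lia.
Qed.
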